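(* Let $m,n$ be positive integers. There is an explicit bijection between the set of $(m,n)$-partial fully-packed loop configurations and the set of $(m,n)$-partial height-function matrices.
   Context: An $(m,n)$-partial height-function matrix is an integer matrix $(h_{i,j})_{0\le i\le m,\,0\le j\le n}$ with all entries nonnegative, $h_{0,k}=k$ for $0\le k\le n$, $h_{\ell,0}=\ell$ for $0\le \ell\le m$, and such that any two horizontally or vertically adjacent entries differ by exactly $1$. The graph $G_{m,n}$ has vertex set $\{v_{i,j}:0\le i\le m+1,\ 0\le j\le n+1\}\setminus\{v_{0,0},v_{0,n+1},v_{m+1,0},v_{m+1,n+1}\}$ and edges $v_{i,j}v_{i+1,j}$ for $0\le i\le m$, $1\le j\le n$, and $v_{i,j}v_{i,j+1}$ for $1\le i\le m$, $0\le j\le n$. Vertices $v_{i,j}$ with $1\le i\le m$, $1\le j\le n$ are interior; the others are boundary vertices. An $(m,n)$-partial fully-packed loop configuration is a subgraph of $G_{m,n}$ (on all vertices) such that every interior vertex has exactly two incident edges, and: for $1\le j\le n$ the edge $v_{0,j}v_{1,j}$ is present if and only if $j$ is odd, and for $1\le i\le m$ the edge $v_{i,0}v_{i,1}$ is present if and only if $i$ is even (edges to bottom and right boundary vertices are unrestricted). *)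

(* Defs.v *)
From mathcomp Require Import all_boot all_order all_algebra.
Set Implicit Arguments. Unset Strict Implicit. Unset Printing Implicit Defensive.

(* Vertices of G_{m,n}: pairs (i,j), 0<=i<=m+1, 0<=j<=n+1.  The four corners
   are included in the type but are isolated (no edge of G_{m,n} touches them)
   and are not interior, so they impose no constraint. *)
Definition vert (m n : nat) := ('I_m.+2 * 'I_n.+2)%type.

(* An edge is encoded as an ordered pair (u,v) with u the endpoint with
   smaller index. *)
Definition edge (m n : nat) := (vert m n * vert m n)%type.

Definition gedge (m n : nat) (e : edge m n) : bool :=
  let: ((i, j), (k, l)) := e in
  [|| [&& (k : nat) == i.+1, (l : nat) == j, i <= m & 1 <= j <= n]
    | [&& (k : nat) == i, (l : nat) == j.+1, 1 <= i <= m & j <= n]].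

Definition interior (m n : nat) (v : vert m n) : bool :=
  (1 <= v.1 <= m) && (1 <= v.2 <= n).

Definition vtx (m n : nat) (i j : nat) : vert m n := (inord i, inord j).

Definition is_pfpl (m n : nat) (E : {set edge m n}) : Prop :=
  [/\ E \subset [set e | gedge e],
      forall v : vert m n, interior v ->
        #|[set e in E | (e.1 == v) || (e.2 == v)]| = 2,
      forall j : nat, 1 <= j <= n ->
        ((vtx m n 0 j, vtx m n 1 j) \in E) = odd j
    & forall i : nat, 1 <= i <= m ->
        ((vtx m n i 0, vtx m n i 1) \in E) = ~~ odd i].

Definition is_phm (m n : nat) (h : 'M[nat]_(m.+1, n.+1)) : Prop :=
  [/\ forall k : 'I_n.+1, h ord0 k = k,
      forall l : 'I_m.+1, h l ord0 = l,
      forall (i : 'I_m.+1) (j : 'I_n.+1), i < m ->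
        (h i j = (h (inord i.+1) j).+1) \/ (h (inord i.+1) j = (h i j).+1)
    & forall (i : 'I_m.+1) (j : 'I_n.+1), j < n ->
        (h i j = (h i (inord j.+1)).+1) \/ (h i (inord j.+1) = (h i j).+1)].

Definition PFPL (m n : nat) := {E : {set edge m n} | is_pfpl E}.
Definition PHM (m n : nat) := {h : 'M[nat]_(m.+1, n.+1) | is_phm h}.

(* Main.v *)
Require Import Defs.
From mathcomp Require Import all_boot all_order all_algebra zify.
From Stdlib Require Import ProofIrrelevance.
Set Implicit Arguments. Unset Strict Implicit. Unset Printing Implicit Defensive.

Definition adj (x y : nat) := x = y.+1 \/ y = x.+1.

Ltac maxsimp := repeat match goal with
  | |- context [maxn ?x ?y] =>
      (rewrite (maxn_idPr (_ : x <= y)); last by lia) ||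
      (rewrite (maxn_idPl (_ : y <= x)); last by lia) end.
Ltac injS := repeat match goal with H : S _ = S _ |- _ => case: H => H end.
Ltac fin := injS; subst; try lia; maxsimp; rewrite ?addn1 ?oddS ?negbK;
   by do 2?case: (odd _).

Lemma four_sum a b c d : adj a b -> adj a c -> adj b d -> adj c d ->
  odd (maxn a b) + odd (maxn c d) + ~~ odd (maxn a c) + ~~ odd (maxn b d) = 2.
Proof.
rewrite /adj.
by case=> Hb; case=> Hc; case=> Hd; case=> He; fin.
Qed.

Lemma step_det x y1 y2 : adj x y1 -> adj x y2 -> odd (maxn x y1) = odd (maxn x y2) -> y1 = y2.
Proof.
rewrite /adj.
case=> H1; case=> H2; injS; subst; try lia; maxsimp; rewrite ?oddS; by case: (odd _).
Qed.

Lemma local a b c (down right : bool) : adj a b -> adj a c -> ~ (b = 0 /\ c = 0) ->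
  odd (maxn a b) + down + ~~ odd (maxn a c) + right = 2 ->
  [/\ adj c (if down == ~~ odd c then c.+1 else c.-1),
       down = odd (maxn c (if down == ~~ odd c then c.+1 else c.-1)),
       adj b (if down == ~~ odd c then c.+1 else c.-1) &
       right = ~~ odd (maxn b (if down == ~~ odd c then c.+1 else c.-1))].
Proof.
rewrite /adj => Hb Hc Hz.
case: Hb => Hb; case: Hc => Hc; injS; subst; injS; subst; try lia;
 maxsimp; rewrite ?oddS ?negbK;
 (case: down; case: right; case Eo: (odd _) => //= _; maxsimp; rewrite /= ?oddS ?negbK ?Eo; try (split => //=; lia)).
Qed.

Lemma vtxK m n (u : vert m n) : vtx m n u.1 u.2 = u.
Proof. by case: u => a b; rewrite /vtx /= !inord_val. Qed.

Lemma vtx1 m n i j : i <= m.+1 -> (vtx m n i j).1 = i :> nat.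
Proof. by move=> hi; rewrite /= inordK. Qed.
Lemma vtx2 m n i j : j <= n.+1 -> (vtx m n i j).2 = j :> nat.
Proof. by move=> hj; rewrite /= inordK. Qed.

Lemma vtx_eq m n i j i' j' : i <= m.+1 -> j <= n.+1 -> i' <= m.+1 -> j' <= n.+1 ->
  (vtx m n i j == vtx m n i' j') = (i == i') && (j == j').
Proof.
move=> h1 h2 h3 h4; rewrite /vtx xpair_eqE -!val_eqE /= !inordK //.
Qed.

Lemma gedge_vtx m n a b c d : a <= m.+1 -> b <= n.+1 -> c <= m.+1 -> d <= n.+1 ->
  gedge (vtx m n a b, vtx m n c d) =
  [|| [&& c == a.+1, d == b, a <= m & 1 <= b <= n]
    | [&& c == a, d == b.+1, 1 <= a <= m & b <= n]].
Proof. by move=> h1 h2 h3 h4; rewrite /gedge /vtx /= !inordK. Qed.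

Definition H m n (h : 'M[nat]_(m.+1, n.+1)) (i j : nat) : nat := h (inord i) (inord j).

Definition rule m n (h : 'M[nat]_(m.+1, n.+1)) (e : edge m n) : bool :=
  let: ((i, j), (k, l)) := e in
  if (k : nat) == i.+1 then odd (maxn (H h i j.-1) (H h i j))
  else ~~ odd (maxn (H h i.-1 j) (H h i j)).

Lemma rule_vtx m n h a b c d : a <= m.+1 -> b <= n.+1 -> c <= m.+1 -> d <= n.+1 ->
  rule h (vtx m n a b, vtx m n c d) =
  if c == a.+1 then odd (maxn (H h a b.-1) (H h a b))
  else ~~ odd (maxn (H h a.-1 b) (H h a b)).
Proof. by move=> h1 h2 h3 h4; rewrite /rule /vtx /= !inordK. Qed.

Definition Fset m n (h : 'M[nat]_(m.+1, n.+1)) : {set edge m n} :=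
  [set e | gedge e && rule h e].

Lemma edge_vtx m n (e : edge m n) : exists a b c d, 
  [/\ a <= m.+1, b <= n.+1, c <= m.+1, d <= n.+1 & e = (vtx m n a b, vtx m n c d)].
Proof.
case: e => [[a b] [c d]]; exists a, b, c, d; split; try by rewrite -ltnS ltn_ord.
by rewrite /vtx !inord_val.
Qed.

Lemma card_inc m n (E : {set edge m n}) i j :
  E \subset [set e | gedge e] -> 1 <= i <= m -> 1 <= j <= n ->
  #|[set e in E | (e.1 == vtx m n i j) || (e.2 == vtx m n i j)]| =
  ((vtx m n i.-1 j, vtx m n i j) \in E) + ((vtx m n i j, vtx m n i.+1 j) \in E)
  + ((vtx m n i j.-1, vtx m n i j) \in E) + ((vtx m n i j, vtx m n i j.+1) \in E).
Proof.
move=> /subsetP sE hi hj.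
set s := [:: (vtx m n i.-1 j, vtx m n i j); (vtx m n i j, vtx m n i.+1 j);
             (vtx m n i j.-1, vtx m n i j); (vtx m n i j, vtx m n i j.+1)].
have -> : [set e in E | (e.1 == vtx m n i j) || (e.2 == vtx m n i j)] =
          [set e in [seq x <- s | x \in E]].
  apply/setP => e; rewrite !inE mem_filter.
  case eE: (e \in E); rewrite ?andbF //=.
  have := sE _ eE; rewrite inE.
  have [a [b [c [d [ha hb hc hd ->]]]]] := edge_vtx e.
  rewrite gedge_vtx // /s !inE /= !xpair_eqE -!val_eqE /= !inordK; try lia;
  case/orP => /and5P [/eqP -> /eqP -> *]; lia.
have us : uniq s.
  rewrite /s /= !inE !xpair_eqE -!val_eqE /= !inordK; lia.
rewrite cardsE; have /card_uniqP -> := filter_uniq (mem E) us.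
by rewrite size_filter /s /= !addnA addn0.
Qed.


Lemma mem_v m n (h : 'M[nat]_(m.+1, n.+1)) a b : a <= m -> 0 < b <= n ->
  ((vtx m n a b, vtx m n a.+1 b) \in Fset h) = odd (maxn (H h a b.-1) (H h a b)).
Proof.
move=> ha hb; rewrite inE gedge_vtx ?rule_vtx ?eqxx; try lia.
all: by rewrite /= ha hb.
Qed.

Lemma mem_h m n (h : 'M[nat]_(m.+1, n.+1)) a b : 0 < a <= m -> b <= n ->
  ((vtx m n a b, vtx m n a b.+1) \in Fset h) = ~~ odd (maxn (H h a.-1 b) (H h a b)).
Proof.
move=> ha hb; rewrite inE gedge_vtx ?rule_vtx; try lia.
have -> : (a == a.+1) = false by lia.
by rewrite !eqxx ha hb /= ?orbT ?andbT ?andbF ?orbF.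
Qed.

Lemma H_top m n (h : 'M[nat]_(m.+1, n.+1)) : is_phm h -> forall j, j <= n -> H h 0 j = j.
Proof.
case=> ht _ _ _ j hj; rewrite /H.
have -> : inord 0 = ord0 :> 'I_m.+1 by apply/val_inj; rewrite /= inordK.
by rewrite ht inordK.
Qed.

Lemma H_left m n (h : 'M[nat]_(m.+1, n.+1)) : is_phm h -> forall i, i <= m -> H h i 0 = i.
Proof.
case=> _ hl _ _ i hi; rewrite /H.
have -> : inord 0 = ord0 :> 'I_n.+1 by apply/val_inj; rewrite /= inordK.
by rewrite hl inordK.
Qed.

Lemma H_adjv m n (h : 'M[nat]_(m.+1, n.+1)) : is_phm h -> forall i j, i < m -> j <= n -> adj (H h i j) (H h i.+1 j).
Proof.
case=> _ _ hv _ i j hi hj; rewrite /H.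
have := hv (inord i) (inord j); rewrite inordK; last by lia.
by apply.
Qed.

Lemma H_adjh m n (h : 'M[nat]_(m.+1, n.+1)) : is_phm h -> forall i j, i <= m -> j < n -> adj (H h i j) (H h i j.+1).
Proof.
case=> _ _ _ hh i j hi hj; rewrite /H.
have := hh (inord i) (inord j); rewrite (inordK (_ : j < n.+1)); last by lia.
by apply.
Qed.

Lemma F_pfpl m n (h : 'M[nat]_(m.+1, n.+1)) : is_phm h -> is_pfpl (Fset (m:=m) (n:=n) h).
Proof.
move=> ph; split.
- by apply/subsetP => e; rewrite !inE => /andP[].
- move=> v; rewrite -(vtxK v) /interior => /andP [hi hj].
  have hv1 : v.1 <= m.+1 by rewrite -ltnS ltn_ord.
  have hv2 : v.2 <= n.+1 by rewrite -ltnS ltn_ord.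
  move: hi hj; rewrite vtx1 // vtx2 //.
  move: (v.1 : nat) (v.2 : nat) => i j.
  move=> hi hj.
  rewrite card_inc //; last by apply/subsetP => e; rewrite !inE => /andP[].
  case: i hi => [|k] hi //; case: j hj => [|l] hj //.
  rewrite /= mem_v ?mem_h; try lia.
  rewrite mem_v /=; try lia.
  apply: four_sum.
  + apply: H_adjh => //; lia.
  + apply: H_adjv => //; lia.
  + apply: H_adjv => //; lia.
  + apply: H_adjh => //; lia.
- move=> j hj; rewrite mem_v // !H_top //; try lia.
- move=> i hi; rewrite mem_h // !H_left //; try lia.
Qed.


Lemma F_inj m n (h1 h2 : 'M[nat]_(m.+1, n.+1)) : is_phm h1 -> is_phm h2 ->
  Fset h1 = Fset h2 -> h1 = h2.
Proof.
move=> p1 p2 eF.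
have key : forall i j, i <= m -> j <= n -> H h1 i j = H h2 i j.
  move=> i j hi; elim: j => [|j IH] hj; first by rewrite !H_left.
  have e := IH (ltnW hj).
  have hb : 0 < j.+1 <= n by lia.
  have E1 := mem_v h1 hi hb; have E2 := mem_v h2 hi hb; rewrite eF E2 /= in E1.
  apply: (step_det (x := H h1 i j)); first by apply: H_adjh.
    by rewrite e; apply: H_adjh.
  by rewrite -E1 e.
apply/matrixP => i j.
have := key i j; rewrite /H !inord_val; apply; rewrite -ltnS; exact: ltn_ord.
Qed.

Definition ev m n (E : {set edge m n}) i j := (vtx m n i j, vtx m n i.+1 j) \in E.
Definition eh m n (E : {set edge m n}) i j := (vtx m n i j, vtx m n i j.+1) \in E.

Fixpoint hr m n (E : {set edge m n}) (i j : nat) : nat :=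
  match j with
  | 0 => i
  | j'.+1 => let x := hr E i j' in if ev E i j == ~~ odd x then x.+1 else x.-1
  end.

Definition Gmat m n (E : {set edge m n}) : 'M[nat]_(m.+1, n.+1) :=
  \matrix_(i < m.+1, j < n.+1) hr E i j.

Lemma H_G m n (E : {set edge m n}) i j : i <= m -> j <= n -> H (Gmat E) i j = hr E i j.
Proof. by move=> hi hj; rewrite /H mxE !inordK. Qed.

Definition Rrow m n (E : {set edge m n}) i :=
  [/\ forall j, j < n -> adj (hr E i j) (hr E i j.+1) /\ ev E i j.+1 = odd (maxn (hr E i j) (hr E i j.+1)),
      forall j, j <= n -> j <= hr E i j + i
    & 0 < i -> forall j, j <= n -> adj (hr E i.-1 j) (hr E i j) /\ eh E i j = ~~ odd (maxn (hr E i.-1 j) (hr E i j))].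

Lemma hr0 m n (E : {set edge m n}) : is_pfpl E -> forall j, j <= n -> hr E 0 j = j.
Proof.
case=> _ _ ht _; elim=> [|j IH] hj //=.
rewrite IH; last by lia.
by rewrite /ev ht ?oddS ?eqxx //; lia.
Qed.

Lemma R0 m n (E : {set edge m n}) : is_pfpl E -> Rrow E 0.
Proof.
move=> pE; split => //.
- move=> j hj; rewrite !hr0 //; try lia.
  split; first by right.
  case: pE => _ _ ht _; rewrite /ev ht; lia.
- move=> j hj; rewrite hr0 //; lia.
Qed.

Lemma deg m n (E : {set edge m n}) k j : is_pfpl E -> k < m -> j < n ->
  ev E k j.+1 + ev E k.+1 j.+1 + eh E k.+1 j + eh E k.+1 j.+1 = 2.
Proof.
case=> sE dE _ _ hk hj.
have := dE (vtx m n k.+1 j.+1).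
rewrite /interior vtx1 ?vtx2; try lia.
rewrite card_inc //; try lia.
apply; lia.
Qed.

Lemma Rstep m n (E : {set edge m n}) k : is_pfpl E -> k < m -> Rrow E k -> Rrow E k.+1.
Proof.
move=> pE hk [Ra Rc _].
have P : forall j, j <= n -> [/\ adj (hr E k j) (hr E k.+1 j),
    eh E k.+1 j = ~~ odd (maxn (hr E k j) (hr E k.+1 j)),
    k.+1 <= hr E k.+1 j + j, j <= hr E k.+1 j + k.+1 &
    (0 < j -> adj (hr E k.+1 j.-1) (hr E k.+1 j) /\
       ev E k.+1 j = odd (maxn (hr E k.+1 j.-1) (hr E k.+1 j)))].
  elim=> [|j IH] hj.
    rewrite /=; split => //; first by right.
    case: pE => _ _ _ hl; rewrite /eh hl; lia.
    lia.
  have [a1 a2 a3 a4 _] := IH (ltnW hj).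
  have [b1 b2] := Ra j hj.
  have hc := Rc j.+1 hj.
  have Ed : hr E k.+1 j.+1 = if ev E k.+1 j.+1 == ~~ odd (hr E k.+1 j)
     then (hr E k.+1 j).+1 else (hr E k.+1 j).-1 by [].
  have := local (down := ev E k.+1 j.+1) (right := eh E k.+1 j.+1) b1 a1 _ _.
  rewrite -Ed => -[]; first by move=> [hb0 hc0]; lia.
    by rewrite -b2 -a2; apply: deg.
  move=> c1 c2 c3 c4; split => //.
  - move: c1 a3; rewrite /adj; lia.
  - move: c3 hc; rewrite /adj; lia.
split.
- move=> j hj; have [_ _ _ _ X] := P j.+1 hj; exact: X.
- by move=> j hj; have [_ _ _ X _] := P j hj.
- by move=> _ j hj; have [X Y _ _ _] := P j hj.
Qed.

Lemma Rall m n (E : {set edge m n}) : is_pfpl E -> forall i, i <= m -> Rrow E i.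
Proof.
move=> pE; elim=> [|i IH] hi; first exact: R0.
apply: Rstep => //; apply: IH; lia.
Qed.

Lemma G_phm m n (E : {set edge m n}) : is_pfpl E -> is_phm (Gmat E).
Proof.
move=> pE; split.
- by move=> k; rewrite mxE hr0 // -ltnS ltn_ord.
- by move=> l; rewrite mxE.
- move=> i j hi; rewrite !mxE inordK; last by lia.
  have hi' : i.+1 <= m by [].
  have hj' : j <= n by rewrite -ltnS ltn_ord.
  have [_ _ Rb] := Rall pE hi'.
  have [X _] := Rb isT j hj'.
  exact: X.
- move=> i j hj; rewrite !mxE inordK; last by lia.
  have hi' : i <= m by rewrite -ltnS ltn_ord.
  have [Ra _ _] := Rall pE hi'.
  by have [X _] := Ra j hj.
Qed.

Lemma FG m n (E : {set edge m n}) : is_pfpl E -> Fset (Gmat E) = E.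
Proof.
move=> pE; have [sE _ _ _] := pE.
apply/setP => e; have [a [b [c [d [ha hb hc hd ->]]]]] := edge_vtx e.
rewrite inE rule_vtx //.
case G: (gedge (vtx m n a b, vtx m n c d)); last first.
  rewrite andFb; apply/esym/negbTE; apply: contraFN G => /(subsetP sE); by rewrite inE.
rewrite andTb; move: G; rewrite gedge_vtx // => /orP [/and5P [/eqP -> /eqP -> ha' hb1 hb2] | /and4P [/eqP -> /eqP -> /andP[ha1 ha2] hb']].
  rewrite eqxx !H_G //; try lia.
  case: b hb hb1 hb2 => // b' _ _ hb2.
  have [Ra _ _] := Rall pE ha'.
  have [_ X] := Ra b' hb2; rewrite /ev in X; by rewrite X.
rewrite (_ : (a == a.+1) = false); last by lia.
rewrite !H_G //; try lia.
have [_ _ Rb] := Rall pE ha2.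
have [_ X] := Rb ha1 b hb'; rewrite /eh in X; by rewrite X.
Qed.

Lemma sig_eq (T : Type) (P : T -> Prop) (x y : {a : T | P a}) : proj1_sig x = proj1_sig y -> x = y.
Proof.
case: x => x px; case: y => y py /= e; subst y; congr exist; apply: proof_irrelevance.
Qed.

Theorem lemma3p12 (m n : nat) (hm : 0 < m) (hn : 0 < n) :
  exists f : PFPL m n -> PHM m n, bijective f.
Proof.
pose f : PFPL m n -> PHM m n := fun E => exist _ (Gmat (proj1_sig E)) (G_phm (proj2_sig E)).
pose g : PHM m n -> PFPL m n := fun h => exist _ (Fset (proj1_sig h)) (F_pfpl (proj2_sig h)).
exists f; exists g.
- move=> E; apply: sig_eq => /=; exact: FG (proj2_sig E).
- move=> h; apply: sig_eq => /=.
  apply: F_inj; [exact: G_phm (F_pfpl (proj2_sig h)) | exact: proj2_sig h |].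
  exact: FG (F_pfpl (proj2_sig h)).
Qed.
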